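(* Let $\mathbb{W}$ be a subgroup of the finite group $\mathbb{W}_3$ that contains $\mathbb{W}_3^{\mathfrak{A}}$, and let $G$ be a $\mathbb{W}$-invariant finite subgroup of $\mathbb{T}_3$. Then there exists $n\in\mathbb{N}$ such that one of the following three possibilities holds: \begin{enumerate} \item $G\cong\mu_n^3$; \item $n$ is even and $G\cong\mu_{n}^2\times\mu_{\frac{n}{2}}$; \item $n$ is divisible by $4$ and $G\cong\mu_{n}^2\times\mu_{\frac{n}{4}}$. \end{enumerate} Here $\mu_k$ denotes the cyclic group of order $k$.
   Context: Let $M_1=\mathbb{Z}^4/\langle h_1+h_2+h_3+h_4\rangle$ with the action of $\mathfrak{S}_4\times\mu_2$ where $\mathfrak{S}_4$ permutes the $h_i$ and the generator of $\mu_2$ acts as $-\mathrm{id}$. $M_3$ is the dual lattice of $M_1$ with the induced (contragredient) action of $\mathfrak{S}_4\times\mu_2$; equivalently $M_3$ is the root lattice of $A_3$ with its $\mathrm{Aut}(A_3)$-action. The image of this action in $\mathrm{GL}(M_3)\cong\mathrm{GL}_3(\mathbb{Z})$ is $\mathbb{W}_3$, and $\mathbb{W}_3^{\mathfrak{A}}$ is its unique subgroup isomorphic to $\mathfrak{A}_4$ (image of $\mathfrak{A}_4\times\{1\}$). $\mathbb{T}_3=\mathrm{Spec}\,\mathbb{C}[M_3]\cong\mathbb{G}_m^3$, on which $\mathrm{GL}(M_3)$ acts by group automorphisms via its action on characters. Concretely, $\mathbb{T}_3$ is the quotient of $\mathbb{T}_2=\mathbb{G}_m^3$ (coordinates $\mathsf{t}_1,\mathsf{t}_2,\mathsf{t}_3$)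 by the involution $(\mathsf{t}_1,\mathsf{t}_2,\mathsf{t}_3)\mapsto(-\mathsf{t}_1,-\mathsf{t}_2,-\mathsf{t}_3)$, with coordinates $\mathsf{t}_1\mathsf{t}_2,\mathsf{t}_1\mathsf{t}_3,\mathsf{t}_2\mathsf{t}_3$. *)

(* Defs.v *)
(* Complex numbers are modelled by algC (algebraic complex
   numbers): every torsion point of (C^x)^3 has algebraic coordinates. *)
From mathcomp Require Import all_boot all_order all_algebra all_fingroup all_field.
Set Implicit Arguments. Unset Strict Implicit. Unset Printing Implicit Defensive.
Import GRing.Theory Num.Theory.
Local Open Scope ring_scope.

(* M_3 = dual of M_1 = sum-zero vectors a in Z^4 (pairing a . x), basis
   b_j = e_j - e_4 (j = 1,2,3); coordinates of a are (a_1,a_2,a_3).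
   sigma acts contragrediently: a'_i = a_{sigma^-1 i}, with a_4 = -(a1+a2+a3).
   Matrices act on column coordinate vectors. *)
Definition i3to4 (j : 'I_3) : 'I_4 := widen_ord (leqnSn 3) j.

Definition rho_perm (s : 'S_4) : 'M[int]_3 :=
  \matrix_(j < 3, k < 3)
    ((((s^-1)%g (i3to4 j) == i3to4 k) : nat)%:Z - (((s^-1)%g (i3to4 j) == ord_max) : nat)%:Z).

(* image of (sigma, eps) in S_4 x mu_2; e = true means eps = -1 acting as -id *)
Definition rhoW (s : 'S_4) (e : bool) : 'M[int]_3 := (-1) ^+ e *: rho_perm s.

Definition W3 : {pred 'M[int]_3} :=
  [pred g | [exists s : 'S_4, exists e : bool, g == rhoW s e]].

Definition W3A : {pred 'M[int]_3} :=
  [pred g | [exists s : 'S_4, (~~ odd_perm s) && (g == rhoW s false)]].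

(* C-points of T_3 = Spec C[M_3] = Hom(M_3, C^x), written in the coordinates
   t_k = t(b_k), as row vectors with nonzero entries. *)
Definition torus_pt (t : 'rV[algC]_3) : bool := [forall k, t 0 k != 0].
Definition tone : 'rV[algC]_3 := const_mx 1.
Definition tmul (t u : 'rV[algC]_3) : 'rV[algC]_3 := \row_k (t 0 k * u 0 k).
Definition tinv (t : 'rV[algC]_3) : 'rV[algC]_3 := \row_k (t 0 k)^-1.

(* action of g in GL(M_3) through its action on characters:
   (g . t)(b_j) = t(g b_j) = prod_k t_k ^ g_{kj} *)
Definition tact (g : 'M[int]_3) (t : 'rV[algC]_3) : 'rV[algC]_3 :=
  \row_j (\prod_k (t 0 k) ^ (g k j)).

Definition finite_subgroup_T3 (G : {pred 'rV[algC]_3}) : Prop :=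
  (exists s : seq 'rV[algC]_3, forall t, (t \in G) <-> (t \in s)) /\
  {subset G <= torus_pt} /\ tone \in G /\
  {in G &, forall t u, tmul t u \in G} /\ {in G, forall t, tinv t \in G}.

Definition subgroup_GL3 (W : {pred 'M[int]_3}) : Prop :=
  1%:M \in W /\ {in W &, forall g h, g *m h \in W} /\ {in W, forall g, invmx g \in W}.

Definition W_invariant (W : {pred 'M[int]_3}) (G : {pred 'rV[algC]_3}) : Prop :=
  forall g t, g \in W -> t \in G -> tact g t \in G.

Definition mu3 (a b c : nat) : {pred 'rV[algC]_3} :=
  [pred t : 'rV[algC]_3 | [forall k : 'I_3, t 0 k ^+ (nth 0%N [:: a; b; c] k) == 1]].

Definition tiso (G H : {pred 'rV[algC]_3}) : Prop :=
  exists f : 'rV[algC]_3 -> 'rV[algC]_3,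
    [/\ {in G, forall t, f t \in H},
        {in G &, injective f},
        (forall u, u \in H -> exists2 t, t \in G & f t = u) &
        {in G &, forall t u, f (tmul t u) = tmul (f t) (f u)}].

(* Main.v *)
Require Import Defs.
From mathcomp Require Import all_boot all_order all_algebra all_fingroup all_field.
From mathcomp Require Import zify ring lra.
Set Implicit Arguments. Unset Strict Implicit. Unset Printing Implicit Defensive.
Import GRing.Theory Num.Theory.
Local Open Scope ring_scope.

Lemma dvdzD (d a b : int) : (d %| a)%Z -> (d %| b)%Z -> (d %| a + b)%Z.
Proof. exact: rpredD. Qed.
Lemma dvdzB (d a b : int) : (d %| a)%Z -> (d %| b)%Z -> (d %| a - b)%Z.
Proof. exact: rpredB. Qed.

Lemma ideal_gen (Q : pred int) (N : nat) : (0 < N)%N -> Q N%:Z -> Q 0 ->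
  (forall x y, Q x -> Q y -> Q (x - y)) ->
  exists2 d : nat, (0 < d)%N & forall x, Q x = (d%:Z %| x)%Z.
Proof.
move=> N0 QN Q0 QB.
have ex : exists n : nat, (0 < n)%N && Q n%:Z by exists N; rewrite N0 QN.
case: (ex_minnP ex) => d /andP[d0 Qd] dmin; exists d => //.
have QO x : Q x -> Q (- x) by move=> Qx; rewrite -sub0r; apply: (QB).
have QD x y : Q x -> Q y -> Q (x + y).
  by move=> Qx Qy; rewrite -[y]opprK; apply: (QB) => //; apply: QO.
have Qmul q : Q (q * d%:Z).
  elim/int_rec: q => [|n IH|n IH]; first by rewrite mul0r.
    by rewrite -addn1 PoszD mulrDl mul1r; apply: (QD).
  by rewrite -addn1 PoszD opprD mulrDl mulN1r; apply: (QB).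
move=> x; apply/idP/idP; last by move/dvdzP => [q ->]; apply: (Qmul).
move=> Qx; apply/dvdz_mod0P.
have Qr : Q (x %% d%:Z)%Z.
  have -> : (x %% d%:Z)%Z = x - (x %/ d%:Z)%Z * d%:Z.
    by rewrite {2}(divz_eq x d%:Z) addrC addKr.
  by apply: (QB).
have r0 : 0 <= (x %% d%:Z)%Z by apply: modz_ge0; rewrite eqz_nat -lt0n.
have rd : (x %% d%:Z)%Z < d%:Z by apply: ltz_pmod.
move: Qr r0 rd; generalize (x %% d%:Z)%Z => r.
case: r => // -[|r] // Qr _ rd.
have := dmin r.+1; rewrite Qr /= => /(_ isT); lia.
Qed.

Lemma half_lem (d p : int) : 0 < d -> (d %| 2 * p)%Z -> ~~ (d %| p)%Z ->
  2 * (p %% d)%Z = d.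
Proof.
move=> d0 /dvdzP [k Hk] ndp.
have r0 : 0 <= (p %% d)%Z by apply: modz_ge0; rewrite lt0r_neq0.
have rd : (p %% d)%Z < d by apply: ltz_pmod.
have rn0 : (p %% d)%Z != 0 by apply: contra ndp => /eqP H; apply/dvdz_mod0P.
have E := divz_eq p d.
move: Hk r0 rd rn0 E; generalize (p %% d)%Z (p %/ d)%Z => r q Hk r0 rd rn0 E.
have H2 : 2 * r = (k - 2 * q) * d by rewrite mulrBl -mulrA -Hk E; ring.
have : (k - 2 * q = 1).
  move: rn0 => /eqP rn0; nia.
by move=> H1; rewrite H2 H1 mul1r.
Qed.

Lemma cyc_lem (d p q : int) : 0 < d -> (d %| 2 * p)%Z -> ~~ (d %| p)%Z ->
  (d %| 2 * q)%Z -> ~~ (d %| q)%Z -> (d %| p - q)%Z.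
Proof.
move=> d0 h1 h2 h3 h4.
have E1 := half_lem d0 h1 h2; have E2 := half_lem d0 h3 h4.
apply/dvdzP; exists ((p %/ d)%Z - (q %/ d)%Z).
rewrite {1}(divz_eq p d) {1}(divz_eq q d).
have : (p %% d)%Z = (q %% d)%Z by apply: (@mulfI _ 2); rewrite // E1 E2.
move=> ->; ring.
Qed.

Lemma lattice (P : int -> int -> int -> bool) (N : nat) :
  (0 < N)%N ->
  P 0 0 0 ->
  (forall a b c a' b' c', P a b c -> P a' b' c' -> P (a - a') (b - b') (c - c')) ->
  P N 0 0 -> P 0 N 0 -> P 0 0 N ->
  (forall a b c, P a b c -> P c a b) ->
  (forall a b c, P a b c -> P (b - c) (a - c) (- c)) ->
  (forall a b c, P a b c -> P (c - b) (- b) (a - b)) ->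
  (forall a b c, P a b c -> P (- a) (c - a) (b - a)) ->
  exists d e : nat, [/\ (0 < d)%N /\ (0 < e)%N, (d %| N)%N /\ (e %| N)%N,
    (d %| e)%N, (e %| 4 * d)%N &
    forall a b c, P a b c = [&& (d%:Z %| a)%Z, (d%:Z %| b)%Z & (e%:Z %| a + b + c)%Z]].
Proof.
move=> N0 P0 PB PN1 PN2 PN3 Pr Pt1 Pt2 Pt3.
have Peq a b c a' b' c' : P a b c -> a = a' -> b = b' -> c = c' -> P a' b' c'.
  by move=> H <- <- <-.
have PO a b c : P a b c -> P (- a) (- b) (- c).
  by move=> H; apply: (Peq _ _ _ _ _ _ (PB _ _ _ _ _ _ P0 H)); rewrite sub0r.
have PD a b c a' b' c' : P a b c -> P a' b' c' -> P (a + a') (b + b') (c + c').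
  move=> H H'; apply: (Peq _ _ _ _ _ _ (PB _ _ _ _ _ _ H (PO _ _ _ H'))); by rewrite opprK.
pose I x := P x (- x) 0.
have [d d0 Id] : exists2 d : nat, (0 < d)%N & forall x, I x = (d%:Z %| x)%Z.
  apply: (ideal_gen N0).
  - by apply: (Peq _ _ _ _ _ _ (PB _ _ _ _ _ _ PN1 PN2)); rewrite ?subr0 ?sub0r.
  - by rewrite /I oppr0.
  - move=> x y Hx Hy; apply: (Peq _ _ _ _ _ _ (PB _ _ _ _ _ _ Hx Hy)); rewrite ?subr0 //; ring.
pose K x := P 0 0 x.
have [e e0 Ke] : exists2 e : nat, (0 < e)%N & forall x, K x = (e%:Z %| x)%Z.
  apply: (ideal_gen N0) => //.
  move=> x y Hx Hy; apply: (Peq _ _ _ _ _ _ (PB _ _ _ _ _ _ Hx Hy)); by rewrite ?subr0.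
have e23 x : I x -> P 0 x (- x) by move/Pr.
have e13 x : I x -> P x 0 (- x).
  by move/e23/Pr/PO; rewrite !opprK oppr0.
have e23I x : P 0 x (- x) -> I x.
  move/Pr/PO/Pr/PO => H; apply: (Peq _ _ _ _ _ _ H); rewrite ?opprK ?oppr0 //.
have e13I x : P x 0 (- x) -> I x.
  move/Pr/PO => H; apply: (Peq _ _ _ _ _ _ H); rewrite ?opprK ?oppr0 //.
have pairI y : P y y 0 -> I y.
  move=> H; apply: (e23I).
  apply: (Peq _ _ _ _ _ _ (PB _ _ _ _ _ _ H (Pr _ _ _ (Pr _ _ _ H)))); rewrite ?subr0 ?sub0r ?subrr //.
have K1 a b c : P a b c -> I a.
  move=> H.
  have y1 : I (a + b - c).
    apply: (pairI); apply: (Peq _ _ _ _ _ _ (PD _ _ _ _ _ _ H (Pt1 _ _ _ H))); ring.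
  have y3 : I (a + c - b).
    apply: (pairI); apply: (Pr).
    apply: (Peq _ _ _ _ _ _ (PD _ _ _ _ _ _ H (Pt2 _ _ _ H))); ring.
  have y2 : I (b + c - a).
    apply: (pairI); apply: (Pr); apply: (Pr).
    apply: (Peq _ _ _ _ _ _ (PD _ _ _ _ _ _ H (Pt3 _ _ _ H))); ring.
  have F1 := PB _ _ _ _ _ _ H (Pr _ _ _ H).
  have F2 : I (a - c) = I (b - a).
    apply/idP/idP => Hx.
      apply: (e23I); apply: (Peq _ _ _ _ _ _ (PB _ _ _ _ _ _ F1 (e13 _ Hx))); ring.
    apply: (e13I); apply: (Peq _ _ _ _ _ _ (PB _ _ _ _ _ _ F1 (e23 _ Hx))); ring.
  move: y1 y2 y3 F2; rewrite !Id => y1 y2 y3 F2.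
  have dpos : 0 < d%:Z by rewrite ltz_nat.
  case Hp: (d%:Z %| a - c)%Z.
    move: F2; rewrite Hp => /esym F2.
    have -> : a = (a + b - c) - (b - a) - (a - c) by ring.
    by apply: dvdzB => //; apply: dvdzB.
  have Hq : ~~ (d%:Z %| b - a)%Z by rewrite -F2 Hp.
  have H2p : (d%:Z %| 2 * (a - c))%Z.
    have -> : 2 * (a - c) = (a + b - c) - (b + c - a) by ring.
    by apply: dvdzB.
  have H2q : (d%:Z %| 2 * (b - a))%Z.
    have -> : 2 * (b - a) = (b + c - a) - (a + c - b) by ring.
    by apply: dvdzB.
  have := cyc_lem dpos H2p (negbT Hp) H2q Hq => Hpq.
  have -> : a = (a + b - c) - 2 * (b - a) - ((a - c) - (b - a)) by ring.
  by apply: dvdzB => //; apply: dvdzB => //; rewrite -mulr2n -mulr_natl; apply: dvdz_mull.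
have Kdec a b c : P a b c -> I a -> I (a + b) -> K (a + b + c).
  move=> H Ha Hab.
  have H1 := PB _ _ _ _ _ _ H Ha.
  have H2 := PB _ _ _ _ _ _ H1 (e23 _ Hab).
  by apply: (Peq _ _ _ _ _ _ H2); ring.
have Kcomp a b c : I a -> I (a + b) -> K (a + b + c) -> P a b c.
  move=> Ha Hab Hk.
  have := PD _ _ _ _ _ _ (PD _ _ _ _ _ _ Ha (e23 _ Hab)) Hk => H.
  by apply: (Peq _ _ _ _ _ _ H); ring.
exists d, e; split => //; try split => //.
- by rewrite -(dvdzE d%:Z N%:Z) -Id; apply: (Peq _ _ _ _ _ _ (PB _ _ _ _ _ _ PN1 PN2)); rewrite ?subr0 ?sub0r.
- by rewrite -(dvdzE e%:Z N%:Z) -Ke.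
- rewrite -(dvdzE d%:Z e%:Z) -Id.
  have : K e%:Z by rewrite Ke dvdzz.
  by move/Pr/K1.
- have Hd : I d%:Z by rewrite Id dvdzz.
  have H := Pt1 _ _ _ (e13 _ Hd).
  have : K (4 * d)%N%:Z.
    have -> : (4 * d)%N%:Z = (0 - - d%:Z) + (d%:Z - - d%:Z) + - - d%:Z.
      by rewrite PoszM; ring.
    apply: (Kdec) => //.
      by apply: (Peq _ _ _ _ _ _ Hd); ring.
    rewrite Id; have -> : 0 - - d%:Z + (d%:Z - - d%:Z) = d%:Z * 3 by ring.
    by apply: dvdz_mulr; rewrite dvdzz.
  by rewrite Ke dvdzE.
- move=> a b c; apply/idP/idP.
    move=> H; rewrite -!Id.
    rewrite (K1 _ _ _ H) (K1 _ _ _ (Pr _ _ _ (Pr _ _ _ H))) /= -Ke.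
    apply: (Kdec) => //; first exact: K1 H.
    by rewrite Id dvdzD // -Id; [apply: (K1 _ _ _ H) | apply: (K1 _ _ _ (Pr _ _ _ (Pr _ _ _ H)))].
  case/and3P => Ha Hb Hs; apply: (Kcomp); rewrite ?Id ?Ke //.
  by apply: dvdzD.
Qed.

Definition ext (t : 'rV[algC]_3) (i : 'I_4) : algC :=
  if (i < 3)%N then t 0 (inord i) else 1.
Definition mk3 (a b c : algC) : 'rV[algC]_3 := \row_(j < 3) nth 1 [:: a; b; c] j.

Lemma ext_mk3 a b c i : ext (mk3 a b c) i = nth 1 [:: a; b; c; 1] i.
Proof. by rewrite /ext; case: i => [[|[|[|[|i]]]] Hi] //=; rewrite mxE inordK. Qed.

Lemma prod_ind (t : 'rV[algC]_3) (i : 'I_4) :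
  \prod_(k < 3) t 0 k ^ (((i3to4 k == i) : nat) : int) = ext t i.
Proof.
rewrite /ext; case: ifP => Hi.
  rewrite (bigD1 (inord i)) //=.
  have -> : i3to4 (inord i) == i by apply/eqP/val_inj; rewrite /= inordK.
  rewrite big1 ?mulr1 ?expr1z // => k Hk.
  have -> : (i3to4 k == i) = false.
    apply/negbTE; apply: contra Hk => /eqP <-.
    by apply/eqP/val_inj; rewrite /= inordK.
  by rewrite expr0z.
rewrite big1 // => k _.
have -> : (i3to4 k == i) = false.
  by apply/negbTE; apply: contraFN Hi => /eqP <-; rewrite /= ltn_ord.
by rewrite expr0z.
Qed.

Lemma tact_rho (s : 'S_4) (t : 'rV[algC]_3) : (forall k, t 0 k != 0) ->
  tact (rho_perm s) t = \row_j (ext t (s (i3to4 j)) / ext t (s ord_max)).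
Proof.
move=> tn0; apply/rowP => j; rewrite !mxE.
under eq_bigr => k _ do
  rewrite mxE !(canF_eq (permKV s)) expfzDr // -invr_expz.
by rewrite big_split /= prodfV !prod_ind.
Qed.

Definition q0 : 'I_4 := @Ordinal 4 0 isT.
Definition q1 : 'I_4 := @Ordinal 4 1 isT.
Definition q2 : 'I_4 := @Ordinal 4 2 isT.
Definition q3 : 'I_4 := @Ordinal 4 3 isT.

Definition rh4 : 'S_4 := (tperm q0 q2 * tperm q0 q1)%g.
Definition t14 : 'S_4 := (tperm q0 q1 * tperm q2 q3)%g.
Definition t24 : 'S_4 := (tperm q0 q2 * tperm q1 q3)%g.
Definition t34 : 'S_4 := (tperm q0 q3 * tperm q1 q2)%g.

Lemma rh4E (x : 'I_4) : nat_of_ord (rh4 x) = nth 0%N [:: 2; 0; 1; 3]%N x.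
Proof. by case: x => [[|[|[|[|?]]]] ?] //; rewrite permM /tperm !permE. Qed.
Lemma t14E (x : 'I_4) : nat_of_ord (t14 x) = nth 0%N [:: 1; 0; 3; 2]%N x.
Proof. by case: x => [[|[|[|[|?]]]] ?] //; rewrite permM /tperm !permE. Qed.
Lemma t24E (x : 'I_4) : nat_of_ord (t24 x) = nth 0%N [:: 2; 3; 0; 1]%N x.
Proof. by case: x => [[|[|[|[|?]]]] ?] //; rewrite permM /tperm !permE. Qed.
Lemma t34E (x : 'I_4) : nat_of_ord (t34 x) = nth 0%N [:: 3; 2; 1; 0]%N x.
Proof. by case: x => [[|[|[|[|?]]]] ?] //; rewrite permM /tperm !permE. Qed.

Lemma even_rh4 : ~~ odd_perm rh4.
Proof. by rewrite /rh4 odd_permM !odd_tperm. Qed.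
Lemma even_t14 : ~~ odd_perm t14.
Proof. by rewrite /t14 odd_permM !odd_tperm. Qed.
Lemma even_t24 : ~~ odd_perm t24.
Proof. by rewrite /t24 odd_permM !odd_tperm. Qed.
Lemma even_t34 : ~~ odd_perm t34.
Proof. by rewrite /t34 odd_permM !odd_tperm. Qed.

Lemma tact_mk3 (s : 'S_4) a b c : a != 0 -> b != 0 -> c != 0 ->
  tact (rho_perm s) (mk3 a b c) =
  \row_j (nth 1 [:: a; b; c; 1] (s (i3to4 j)) / nth 1 [:: a; b; c; 1] (s ord_max)).
Proof.
move=> a0 b0 c0; rewrite tact_rho.
  by apply/rowP => j; rewrite !mxE !ext_mk3.
by move=> k; rewrite mxE; case: k => [[|[|[|?]]] ?].
Qed.

Lemma mk3_eq (a b c : algC) (r : 'rV[algC]_3) :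
  r 0 (@Ordinal 3 0 isT) = a -> r 0 (@Ordinal 3 1 isT) = b -> r 0 (@Ordinal 3 2 isT) = c ->
  r = mk3 a b c.
Proof.
move=> ha hb hc; apply/rowP => j; rewrite mxE.
case: j => [[|[|[|?]]] Hj] //=.
- by rewrite -ha; congr (r 0 _); apply: val_inj.
- by rewrite -hb; congr (r 0 _); apply: val_inj.
- by rewrite -hc; congr (r 0 _); apply: val_inj.
Qed.

Lemma act_rh4 a b c : a != 0 -> b != 0 -> c != 0 ->
  tact (rho_perm rh4) (mk3 a b c) = mk3 c a b.
Proof.
move=> a0 b0 c0; rewrite tact_mk3 //.
by apply: mk3_eq; rewrite mxE !rh4E /= divr1.
Qed.
Lemma act_t14 a b c : a != 0 -> b != 0 -> c != 0 ->
  tact (rho_perm t14) (mk3 a b c) = mk3 (b / c) (a / c) (1 / c).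
Proof.
move=> a0 b0 c0; rewrite tact_mk3 //.
by apply: mk3_eq; rewrite mxE !t14E /=.
Qed.
Lemma act_t24 a b c : a != 0 -> b != 0 -> c != 0 ->
  tact (rho_perm t24) (mk3 a b c) = mk3 (c / b) (1 / b) (a / b).
Proof.
move=> a0 b0 c0; rewrite tact_mk3 //.
by apply: mk3_eq; rewrite mxE !t24E /=.
Qed.
Lemma act_t34 a b c : a != 0 -> b != 0 -> c != 0 ->
  tact (rho_perm t34) (mk3 a b c) = mk3 (1 / a) (c / a) (b / a).
Proof.
move=> a0 b0 c0; rewrite tact_mk3 //.
by apply: mk3_eq; rewrite mxE !t34E /=.
Qed.

Definition o0 : 'I_3 := @Ordinal 3 0 isT.
Definition o1 : 'I_3 := @Ordinal 3 1 isT.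
Definition o2 : 'I_3 := @Ordinal 3 2 isT.

Lemma mk3_mul a b c a' b' c' :
  tmul (mk3 a b c) (mk3 a' b' c') = mk3 (a * a') (b * b') (c * c').
Proof. by apply/rowP => j; rewrite !mxE; case: j => [[|[|[|?]]] ?]. Qed.
Lemma mk3_inv a b c : tinv (mk3 a b c) = mk3 a^-1 b^-1 c^-1.
Proof. by apply/rowP => j; rewrite !mxE; case: j => [[|[|[|?]]] ?]. Qed.
Lemma tone_mk3 : tone = mk3 1 1 1.
Proof. by apply/rowP => j; rewrite !mxE; case: j => [[|[|[|?]]] ?]. Qed.
Lemma row3 (r : 'rV[algC]_3) : r = mk3 (r 0 o0) (r 0 o1) (r 0 o2).
Proof. by apply: mk3_eq. Qed.

Lemma prod_const_seq (T : Type) (x : algC) (l : seq T) :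
  \prod_(g <- l) x = x ^+ size l.
Proof. by elim: l => [|g l IH]; rewrite ?big_nil ?big_cons ?IH ?exprS. Qed.

Lemma prod_neq0_seq (l : seq 'rV[algC]_3) k :
  (forall g, g \in l -> g 0 k != 0) -> \prod_(g <- l) g 0 k != 0.
Proof.
elim: l => [|g l IH] H; first by rewrite big_nil oner_neq0.
rewrite big_cons mulf_neq0 //; first by apply: H; rewrite inE eqxx.
by apply: IH => h Hh; apply: H; rewrite inE Hh orbT.
Qed.

Lemma dvd_aux (d a N : nat) : (d %| a)%N -> (d %| N)%N -> (N %| a * (N %/ d))%N.
Proof.
move=> /dvdnP[a' ->] dN.
by rewrite -mulnA [(d * _)%N]mulnC divnK // dvdn_mull.
Qed.

Theorem corollary7p3 (W : {pred 'M[int]_3}) (G : {pred 'rV[algC]_3}) :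
  subgroup_GL3 W -> (forall g, g \in W -> g \in W3) -> (forall g, g \in W3A -> g \in W) ->
  finite_subgroup_T3 G -> W_invariant W G ->
  exists n : nat, (0 < n)%N /\
    [\/ tiso G (mu3 n n n),
        (2 %| n)%N /\ tiso G (mu3 n n (n %/ 2)) |
        (4 %| n)%N /\ tiso G (mu3 n n (n %/ 4))].
Proof.
move=> _ _ WA [[s0 Hs0] [Gtor [G1 [GM GV]]]] Ginv.
have Gact s t : ~~ odd_perm s -> t \in G -> tact (rho_perm s) t \in G.
  move=> Hs Ht.
  have : rhoW s false \in W.
    by apply: WA; rewrite inE; apply/existsP; exists s; rewrite Hs eqxx.
  by move=> /Ginv /(_ Ht); rewrite /rhoW expr0 scale1r.
have Gnz t k : t \in G -> t 0 k != 0.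
  by move=> /Gtor; rewrite unfold_in => /forallP.
pose sl := undup s0.
have Hsl t : (t \in G) = (t \in sl).
  by rewrite mem_undup; apply/idP/idP => /Hs0.
have usl : uniq sl := undup_uniq s0.
have N0 : (0 < size sl)%N.
  by move: G1; rewrite Hsl; case: (sl).
have Gexp t k : t \in G -> t 0 k ^+ size sl = 1.
  move=> Ht.
  have pe : perm_eq (map (tmul t) sl) sl.
    apply: uniq_perm => //.
      rewrite map_inj_in_uniq // => g h _ _ /rowP E; apply/rowP => j.
      by have := E j; rewrite !mxE => /mulfI; apply; apply: Gnz.
    move=> h; apply/mapP/idP => [[g Hg ->]|Hh].
      by rewrite -Hsl; apply: GM => //; rewrite Hsl.
    exists (tmul (tinv t) h).
      by rewrite -Hsl; apply: GM; [exact: GV | rewrite Hsl].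
    by apply/rowP => j; rewrite !mxE mulrA mulfV ?mul1r // Gnz.
  have E : \prod_(g <- map (tmul t) sl) g 0 k = \prod_(g <- sl) g 0 k.
    by apply: perm_big.
  rewrite big_map (eq_bigr (fun g : 'rV[algC]_3 => t 0 k * g 0 k)) in E; last by move=> g _; rewrite mxE.
  rewrite big_split /= prod_const_seq in E.
  have Pn0 : \prod_(g <- sl) g 0 k != 0.
    by apply: prod_neq0_seq => g; rewrite -Hsl => /Gnz.
  by apply: (mulIf Pn0); rewrite mul1r.
have [z zp] := C_prim_root_exists N0.
have z0 : z != 0.
  apply/eqP => Z; move: (prim_expr_order zp); rewrite Z expr0n.
  by rewrite eqn0Ngt N0 /= => /eqP; rewrite eq_sym oner_eq0.
have Gform t : t \in G -> exists a b c : nat, t = mk3 (z ^+ a) (z ^+ b) (z ^+ c).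
  move=> Ht.
  have [a Ha] := prim_rootP zp (Gexp t o0 Ht).
  have [b Hb] := prim_rootP zp (Gexp t o1 Ht).
  have [c Hc] := prim_rootP zp (Gexp t o2 Ht).
  by exists a, b, c; rewrite (row3 t) Ha Hb Hc.
pose E (a b c : int) := mk3 (z ^ a) (z ^ b) (z ^ c).
pose P a b c := E a b c \in G.
have zD x y : z ^ (x + y) = z ^ x * z ^ y by apply: expfzDr.
have zB x y : z ^ (x - y) = z ^ x * (z ^ y)^-1 by rewrite zD invr_expz.
have zn0 x : z ^ x != 0 by apply: expfz_neq0.
have zN1 : z ^ (size sl : int) = 1 by apply: (prim_expr_order zp).
have P0 : P 0 0 0 by rewrite /P /E !expr0z -tone_mk3.
have PB a b c a' b' c' : P a b c -> P a' b' c' -> P (a - a') (b - b') (c - c').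
  move=> H H'; rewrite /P.
  suff -> : E (a - a') (b - b') (c - c') = tmul (E a b c) (tinv (E a' b' c')).
    by apply: GM => //; apply: GV.
  by rewrite /E mk3_inv mk3_mul !zB.
have PN1 : P (size sl) 0 0 by rewrite /P /E zN1 !expr0z -tone_mk3.
have PN2 : P 0 (size sl) 0 by rewrite /P /E zN1 !expr0z -tone_mk3.
have PN3 : P 0 0 (size sl) by rewrite /P /E zN1 !expr0z -tone_mk3.
have Pr a b c : P a b c -> P c a b.
  by move=> H; have := Gact _ _ even_rh4 H; rewrite /E act_rh4.
have P1 a b c : P a b c -> P (b - c) (a - c) (- c).
  move=> H; have := Gact _ _ even_t14 H; rewrite /E act_t14 //.
  by rewrite /P /E !zB div1r -invr_expz.
have P2 a b c : P a b c -> P (c - b) (- b) (a - b).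
  move=> H; have := Gact _ _ even_t24 H; rewrite /E act_t24 //.
  by rewrite /P /E !zB div1r -invr_expz.
have P3 a b c : P a b c -> P (- a) (c - a) (b - a).
  move=> H; have := Gact _ _ even_t34 H; rewrite /E act_t34 //.
  by rewrite /P /E !zB div1r -invr_expz.
have [d [e [[d0 e0] [dN eN] de ed4 Pchar]]] :=
  @lattice P (size sl) N0 P0 PB PN1 PN2 PN3 Pr P1 P2 P3.
have Pnat (a b c : nat) : mk3 (z ^+ a) (z ^+ b) (z ^+ c) \in G ->
    [&& (d %| a)%N, (d %| b)%N & (e %| a + b + c)%N].
  move=> H; have : P a b c := H.
  by rewrite Pchar -!PoszD !dvdzE.
have nd : ((size sl) %/ ((size sl) %/ d))%N = d.
  by rewrite -{1}(divnK dN) mulKn // divn_gt0 // dvdn_leq.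
have ne : ((size sl) %/ ((size sl) %/ e))%N = e.
  by rewrite -{1}(divnK eN) mulKn // divn_gt0 // dvdn_leq.
have claim : tiso G (mu3 ((size sl) %/ d) ((size sl) %/ d) ((size sl) %/ e)).
  pose f (t : 'rV[algC]_3) := mk3 (t 0 o0) (t 0 o1) (t 0 o0 * t 0 o1 * t 0 o2).
  exists f; split.
  - move=> t Ht; have [a [b [c Et]]] := Gform t Ht.
    move: Ht; rewrite Et => /Pnat /and3P [Da Db Ds].
    rewrite /f inE; apply/forallP => k; rewrite !mxE.
    case: k => [[|[|[|?]]] ?] //=; rewrite -?exprD -exprM -(prim_order_dvd zp).
    + exact: dvd_aux.
    + exact: dvd_aux.
    + exact: dvd_aux.
  - move=> t u Ht Hu Efu.
    have E0 := congr1 (fun r : 'rV[algC]_3 => r 0 o0) Efu.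
    have E1 := congr1 (fun r : 'rV[algC]_3 => r 0 o1) Efu.
    have E2 := congr1 (fun r : 'rV[algC]_3 => r 0 o2) Efu.
    rewrite /= !mxE /= in E0 E1 E2.
    rewrite (row3 t) (row3 u) E0 E1; congr mk3.
    rewrite E0 E1 in E2; apply: (mulfI _ E2).
    by rewrite mulf_neq0 // Gnz.
  - move=> u Hu; rewrite inE in Hu; move/forallP: Hu => Hu.
    have H0 := Hu o0; have H1 := Hu o1; have H2 := Hu o2.
    rewrite /= in H0 H1 H2.
    have pd : ((size sl) %/ d).-primitive_root (z ^+ d).
      by rewrite -{2}nd; apply: dvdn_prim_root => //; apply: dvdn_div.
    have pe : ((size sl) %/ e).-primitive_root (z ^+ e).
      by rewrite -{2}ne; apply: dvdn_prim_root => //; apply: dvdn_div.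
    have [i Hi] := prim_rootP pd (eqP H0).
    have [j Hj] := prim_rootP pd (eqP H1).
    have [l Hl] := prim_rootP pe (eqP H2).
    rewrite -exprM in Hi; rewrite -exprM in Hj; rewrite -exprM in Hl.
    exists (E (d * i)%N (d * j)%N ((e * l)%N%:Z - (d * i)%N%:Z - (d * j)%N%:Z)).
      rewrite -/(P _ _ _) Pchar; apply/and3P; split.
      + by rewrite dvdzE /= dvdn_mulr.
      + by rewrite dvdzE /= dvdn_mulr.
      + have -> : (d * i)%N%:Z + (d * j)%N%:Z + ((e * l)%N%:Z - (d * i)%N%:Z - (d * j)%N%:Z)
            = (e * l)%N%:Z by ring.
        by rewrite dvdzE /= dvdn_mulr.
    rewrite (row3 u) Hi Hj Hl /f /E !mxE /=.
    rewrite -!zD; congr mk3.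
    by rewrite [RHS]exprnP; congr (z ^ _); ring.
  - move=> t u _ _; rewrite /f.
    by apply/rowP => k; rewrite !mxE; case: k => [[|[|[|?]]] ?] //=; ring.
have [k Hk] : exists k, e = (d * k)%N by case/dvdnP: de => k ->; exists k; rewrite mulnC.
have k4 : (k %| 4)%N.
  by rewrite -(@dvdn_pmul2l d) // -Hk [(d * 4)%N]mulnC.
have kN : (k %| (size sl) %/ d)%N by rewrite dvdn_divRL // mulnC -Hk.
have mE : ((size sl) %/ e)%N = ((size sl) %/ d %/ k)%N by rewrite Hk divnMA.
exists ((size sl) %/ d)%N; split; first by rewrite divn_gt0 // dvdn_leq.
have : (k \in [:: 1; 2; 4])%N.
  have k0 : (0 < k)%N by apply: dvdn_gt0 k4.
  have := @dvdn_leq k 4 isT k4.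
  case: k k4 {Hk kN mE} k0 => [|[|[|[|[|?]]]]] //.
rewrite !inE => /or3P [] /eqP kv; rewrite kv in mE kN.
- by apply: Or31; rewrite -[X in mu3 _ _ X]divn1 -mE.
- by apply: Or32; split => //; rewrite -mE.
- by apply: Or33; split => //; rewrite -mE.
Qed.
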